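(* Let $\lambda\in D\setminus\{0\}$ and put $\widetilde g^\lambda(z)=\sum_{m=0}^\infty\lambda^{\sigma_\infty(m)}z^m$ for $z\in D$. Then \[ \mathcal{F}\big(\widetilde g^\lambda-1\big)=\frac{\widetilde g^\lambda-1}{\lambda}+\Big(\lambda-\frac1\lambda\Big)z . \]
   Context: $T$ is the Collatz map $T(n)=\frac{3n+1}2$ ($n$ odd), $T(n)=\frac n2$ ($n$ even). The total stopping time $\sigma_\infty(n)$, for a positive integer $n$, is the least $k\ge0$ with $T^k(n)=1$ (and $\sigma_\infty(n)=\infty$ if no such $k$ exists); also $\sigma_\infty(0):=0$. Convention: $\lambda^\infty=0$ for $|\lambda|<1$. $D$ is the open unit disk, $A(D)$ the holomorphic functions on $D$, and $\mathcal{F}$ the operator on $A(D)$ given by $\mathcal{F}\big(\sum_{n\ge0}a_nz^n\big)=\sum_{n\ge0}a_nz^{2n}+\sum_{k\ge0}a_{3k+2}z^{2k+1}$. *)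

(* Defs.v *)
From Stdlib Require Import Reals ClassicalEpsilon Arith.
From Coquelicot Require Import Coquelicot.

Definition collatzT (n : nat) : nat :=
  if Nat.even n then (n / 2)%nat else ((3 * n + 1) / 2)%nat.

(* Specification of the total stopping time: [Some k] = least k with T^k(n) = 1,
   [None] = infinity (no such k). *)
Definition is_total_stopping (n : nat) (s : option nat) : Prop :=
  match s with
  | Some k => Nat.iter k collatzT n = 1%nat /\ (forall j, (j < k)%nat -> Nat.iter j collatzT n <> 1%nat)
  | None => forall k, Nat.iter k collatzT n <> 1%nat
  end.

(* sigma_infty(n); with the convention sigma_infty(0) := 0. *)
Definition sigma_inf (n : nat) : option nat :=
  match n with
  | 0%nat => Some 0%nat
  | _ => epsilon (inhabits None) (is_total_stopping n)
  end.

(* lambda ^ s, with the convention lambda^infty = 0 (|lambda| < 1). *)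
Definition lam_pow (lam : C) (s : option nat) : C :=
  match s with
  | Some k => Cpow lam k
  | None => RtoC 0
  end.

Definition gcoef (lam : C) (m : nat) : C := lam_pow lam (sigma_inf m).

(* The operator F acting on Taylor coefficient sequences:
   F(sum a_n z^n) = sum a_n z^{2n} + sum a_{3k+2} z^{2k+1}, i.e. the image has
   coefficient a_{m/2} at even m and a_{3k+2} at m = 2k+1. *)
Definition Fcoef (a : nat -> C) (m : nat) : C :=
  if Nat.even m then a (m / 2)%nat else a (3 * (m / 2) + 2)%nat.

Definition sub1coef (a : nat -> C) (n : nat) : C :=
  match n with 0%nat => Cminus (a 0%nat) (RtoC 1) | _ => a n end.

(* Main.v *)
Require Import Defs.
From Stdlib Require Import Reals ClassicalEpsilon Arith Lia Lra.
From Coquelicot Require Import Coquelicot.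

Lemma tsp_unique n s1 s2 : is_total_stopping n s1 -> is_total_stopping n s2 -> s1 = s2.
Proof.
  destruct s1 as [k1|], s2 as [k2|]; simpl; intros H1 H2.
  - destruct H1 as [A1 B1], H2 as [A2 B2].
    destruct (lt_eq_lt_dec k1 k2) as [[h|h]|h]; subst; auto.
    + exfalso; exact (B2 _ h A1).
    + exfalso; exact (B1 _ h A2).
  - exfalso; exact (H2 _ (proj1 H1)).
  - exfalso; exact (H1 _ (proj1 H2)).
  - reflexivity.
Qed.

Lemma tsp_exists n : exists s, is_total_stopping n s.
Proof.
  destruct (classic (exists k, Nat.iter k collatzT n = 1%nat)) as [H|H].
  - assert (Hw : forall N k, (k <= N)%nat -> Nat.iter k collatzT n = 1%nat ->
       exists s, is_total_stopping n s).
    { induction N; intros k hk hit.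
      - exists (Some k); split; auto. intros; lia.
      - destruct (classic (exists j, (j < k)%nat /\ Nat.iter j collatzT n = 1%nat)) as [[j [hj1 hj2]]|hn].
        + apply (IHN j); auto; lia.
        + exists (Some k); split; auto. intros j hj e; apply hn; eauto. }
    destruct H as [k hk]; exact (Hw k k (le_n _) hk).
  - exists None; simpl; intros k hk; apply H; eauto.
Qed.

Lemma sigma_spec n : (n <> 0)%nat -> is_total_stopping n (sigma_inf n).
Proof.
  intros Hn; destruct n; [lia|]. unfold sigma_inf.
  apply epsilon_spec. apply tsp_exists.
Qed.

Lemma tsp_step n s : n <> 1%nat -> is_total_stopping (collatzT n) s ->
  is_total_stopping n (option_map S s).
Proof.
  intros Hn; destruct s as [k|]; cbv beta iota delta [option_map is_total_stopping].
  - intros [A B]; split.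
    + rewrite Nat.iter_succ_r; auto.
    + intros j hj; destruct j; [exact Hn|].
      rewrite Nat.iter_succ_r. apply B; lia.
  - intros H k; destruct k; [exact Hn|]. rewrite Nat.iter_succ_r. apply H.
Qed.

Lemma sigma_step n : (2 <= n)%nat -> (collatzT n <> 0)%nat ->
  sigma_inf n = option_map S (sigma_inf (collatzT n)).
Proof.
  intros h1 h2. apply (tsp_unique n). apply sigma_spec; lia.
  apply tsp_step; [lia|]. apply sigma_spec; auto.
Qed.

Lemma gcoef_step lam n : (2 <= n)%nat -> (collatzT n <> 0)%nat ->
  gcoef lam n = Cmult lam (gcoef lam (collatzT n)).
Proof.
  intros h1 h2; unfold gcoef; rewrite (sigma_step n h1 h2).
  destruct (sigma_inf (collatzT n)); simpl; auto.
  rewrite Cmult_0_r; auto.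
Qed.

Lemma even_double j : Nat.even (2 * j) = true.
Proof. induction j; auto. replace (2 * S j)%nat with (S (S (2*j))) by lia. simpl; auto. Qed.
Lemma even_double1 j : Nat.even (2 * j + 1) = false.
Proof. induction j; auto. replace (2 * S j + 1)%nat with (S (S (2*j+1))) by lia. simpl; auto. Qed.

Lemma T_even j : collatzT (2 * j) = j.
Proof. unfold collatzT; rewrite even_double. rewrite Nat.mul_comm, Nat.div_mul; lia. Qed.
Lemma T_odd k : collatzT (2 * k + 1) = (3 * k + 2)%nat.
Proof. unfold collatzT; rewrite even_double1.
  replace (3 * (2 * k + 1) + 1)%nat with ((3*k+2)*2)%nat by lia. rewrite Nat.div_mul; lia. Qed.

Lemma gcoef0 lam : gcoef lam 0 = RtoC 1.
Proof. reflexivity. Qed.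
Lemma gcoef1 lam : gcoef lam 1 = RtoC 1.
Proof. unfold gcoef. replace (sigma_inf 1) with (Some 0%nat). reflexivity.
  apply (tsp_unique 1). simpl; split; auto; intros; lia. apply sigma_spec; lia. Qed.
Lemma gcoef2 lam : gcoef lam 2 = lam.
Proof. rewrite (gcoef_step lam 2); [| lia | discriminate].
  change (collatzT 2) with 1%nat. rewrite gcoef1. apply Cmult_1_r. Qed.

Lemma Fcoef_eq lam (hl : lam <> RtoC 0) m :
  Fcoef (sub1coef (gcoef lam)) m =
  Cplus (Cmult (Cdiv (RtoC 1) lam) (sub1coef (gcoef lam) m))
        (if (m =? 1)%nat then Cminus lam (Cdiv (RtoC 1) lam) else RtoC 0).
Proof.
  unfold Fcoef.
  destruct (Nat.Even_or_Odd m) as [[j ->]|[k ->]].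
  - rewrite even_double, (Nat.mul_comm 2 j), Nat.div_mul by lia.
    destruct j.
    + simpl. unfold Cminus. rewrite gcoef0. field. auto.
    + replace (S j * 2 =? 1)%nat with false by (symmetry; apply Nat.eqb_neq; lia).
      replace (sub1coef (gcoef lam) (S j * 2)) with (gcoef lam (S j * 2))
        by (destruct (S j * 2)%nat eqn:E; [lia|reflexivity]).
      rewrite (gcoef_step lam (S j * 2)); try (rewrite Nat.mul_comm, T_even; lia); try lia.
      rewrite Nat.mul_comm, T_even. simpl sub1coef. field. auto.
  - rewrite even_double1.
    replace ((2 * k + 1) / 2)%nat with k.
    2:{ replace (2*k+1)%nat with (1 + k*2)%nat by lia. rewrite Nat.div_add by lia. reflexivity. }
    destruct k.
    + simpl. rewrite gcoef2, gcoef1. field. auto.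
    + replace (2 * S k + 1 =? 1)%nat with false by (symmetry; apply Nat.eqb_neq; lia).
      replace (sub1coef (gcoef lam) (2 * S k + 1)) with (gcoef lam (2 * S k + 1))
        by (destruct (2 * S k + 1)%nat eqn:E; [lia|reflexivity]).
      replace (sub1coef (gcoef lam) (3 * S k + 2)) with (gcoef lam (3 * S k + 2))
        by (destruct (3 * S k + 2)%nat eqn:E; [lia|reflexivity]).
      rewrite (gcoef_step lam (2 * S k + 1)); try (rewrite T_odd; lia); try lia.
      rewrite T_odd. field. auto.
Qed.

Lemma gcoef_bound lam : (Cmod lam < 1)%R -> forall m, (Cmod (gcoef lam m) <= 1)%R.
Proof.
  intros h m; unfold gcoef, lam_pow. destruct (sigma_inf m).
  - rewrite Cmod_pow. rewrite <- (pow1 n). apply pow_incr. split; [apply Cmod_ge_0| lra].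
  - rewrite Cmod_0; lra.
Qed.

Lemma is_series_eqv (a : nat -> C) (l l' : C) : is_series a l -> l = l' -> is_series a l'.
Proof. intros H <-; exact H. Qed.

Lemma series_zero (u : nat -> C) l : is_series u l -> is_series (fun _ : nat => RtoC 0) (RtoC 0).
Proof.
  intros H. pose proof (is_series_scal (RtoC 0) u l H) as H2.
  assert (E : forall x : C, scal (RtoC 0) x = RtoC 0) by (intro x; change (Cmult (RtoC 0) x = RtoC 0); ring).
  rewrite E in H2. 
  eapply is_series_ext; [|exact H2]. intros n; simpl. apply E.
Qed.

Lemma series_at0 (w : C) (u : nat -> C) l : is_series u l ->
  is_series (fun m => if (m =? 0)%nat then w else RtoC 0) w.
Proof.
  intros H. apply is_series_decr_1. simpl.
  eapply is_series_eqv; [exact (series_zero u l H)|]. change (RtoC 0 = Cplus w (Copp w)); ring.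
Qed.

Lemma series_at1 (w : C) (u : nat -> C) l : is_series u l ->
  is_series (fun m => if (m =? 1)%nat then w else RtoC 0) w.
Proof.
  intros H. apply is_series_decr_1. apply is_series_decr_1. simpl.
  eapply is_series_eqv; [exact (series_zero u l H)|]. change (RtoC 0 = Cplus (Cplus w (Copp (RtoC 0))) (Copp w)); ring.
Qed.

Theorem mainTheorem10 (lam : C) (hlam0 : lam <> RtoC 0) (hlam1 : (Cmod lam < 1)%R) :
  forall z : C, (Cmod z < 1)%R ->
  exists g : C,
    is_series (fun m => Cmult (gcoef lam m) (Cpow z m)) g /\
    is_series (fun m => Cmult (Fcoef (sub1coef (gcoef lam)) m) (Cpow z m))
      (Cplus (Cdiv (Cminus g (RtoC 1)) lam)
             (Cmult (Cminus lam (Cdiv (RtoC 1) lam)) z)).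
Proof.
  intros z hz.
  assert (Hex : ex_series (fun m => Cmult (gcoef lam m) (Cpow z m))).
  { apply (@ex_series_le C_AbsRing C_CompleteNormedModule _ (fun n => (Cmod z) ^ n)%R).
    - intros n. change (Cmod (Cmult (gcoef lam n) (Cpow z n)) <= Cmod z ^ n)%R. rewrite Cmod_mult, Cmod_pow.
      rewrite <- (Rmult_1_l (Cmod z ^ n)) at 2. apply Rmult_le_compat_r.
      apply pow_le, Cmod_ge_0. apply gcoef_bound; auto.
    - exists (/ (1 - Cmod z))%R. apply is_series_geom. rewrite Rabs_pos_eq; auto. apply Cmod_ge_0. }
  destruct Hex as [g Hg]. exists g; split; auto.
  pose (u := fun m => Cmult (gcoef lam m) (Cpow z m)).
  assert (H1 : is_series (fun m => Cmult (sub1coef (gcoef lam) m) (Cpow z m)) (Cminus g (RtoC 1))).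
  { pose proof (is_series_plus _ _ _ _ Hg (series_at0 (RtoC (-1)) u g Hg)) as H.
    eapply is_series_ext; [|
      replace (Cminus g (RtoC 1)) with (plus g (RtoC (-1)));[exact H|]].
    - intros n. destruct n; simpl.
      + change (Cplus (Cmult (gcoef lam 0) (RtoC 1)) (RtoC (-1)) = Cmult (Cminus (gcoef lam 0) (RtoC 1)) (RtoC 1)).
        rewrite gcoef0. unfold Cminus. ring_simplify. 
        reflexivity.
      + change (Cplus (Cmult (gcoef lam (S n)) (Cmult z (Cpow z n))) (RtoC 0) = Cmult (gcoef lam (S n)) (Cmult z (Cpow z n))). ring.
    - change (Cplus g (RtoC (-1)) = Cminus g (RtoC 1)). unfold Cminus. rewrite <- RtoC_opp; auto. }
  pose proof (is_series_scal (Cdiv (RtoC 1) lam) _ _ H1) as H2.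
  pose proof (is_series_plus _ _ _ _ H2 (series_at1 (Cmult (Cminus lam (Cdiv (RtoC 1) lam)) z) u g Hg)) as H3.
  eapply is_series_ext; [| replace (Cplus _ _) with (plus (scal (Cdiv (RtoC 1) lam) (Cminus g (RtoC 1)))
       (Cmult (Cminus lam (Cdiv (RtoC 1) lam)) z)); [exact H3|]].
  - intros n. rewrite (Fcoef_eq lam hlam0 n).
    change (Cplus (Cmult (Cdiv (RtoC 1) lam) (Cmult (sub1coef (gcoef lam) n) (Cpow z n)))
       (if (n =? 1)%nat then Cmult (Cminus lam (Cdiv (RtoC 1) lam)) z else RtoC 0) =
     Cmult (Cplus (Cmult (Cdiv (RtoC 1) lam) (sub1coef (gcoef lam) n))
        (if (n =? 1)%nat then Cminus lam (Cdiv (RtoC 1) lam) else RtoC 0)) (Cpow z n)).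
    destruct (Nat.eqb_spec n 1).
    + subst n. simpl. ring.
    + ring.
  - change (Cplus (Cmult (Cdiv (RtoC 1) lam) (Cminus g (RtoC 1))) (Cmult (Cminus lam (Cdiv (RtoC 1) lam)) z)
      = Cplus (Cdiv (Cminus g (RtoC 1)) lam) (Cmult (Cminus lam (Cdiv (RtoC 1) lam)) z)).
    field; auto.
Qed.
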